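(* Let $r\ge1$ and let $\lambda=(\lambda_1,\dots,\lambda_{r+1})\in\mathbb{Z}^{r+1}$ be such that $\lambda+\rho$ is a partition. For $m\in\mathrm{Lu}(\lambda+\rho)$ define $f(m)=(a_{i,j})_{1\le i<j\le r+1}$ recursively by $a_{i,r+2}=(\lambda+\rho)_i=\lambda_i+r+1-i$ and $a_{i,j}=a_{i,j+1}-m_{i,j}$. Then $f$ is a bijection $\mathrm{Lu}(\lambda+\rho)\to\mathrm{GT}(\lambda+\rho)$, with inverse $T=(a_{i,j})\mapsto(m_{i,j})$, $m_{i,j}=a_{i,j+1}-a_{i,j}$, and it is weight-preserving: $z^{f(m)}=z^m$.
   Context: Positive roots of $\mathrm{GL}_{r+1}$ are indexed by pairs $(i,j)$ with $1\le i<j\le r+1$; $N=r(r+1)/2$; $\mathbb{N}=\mathbb{Z}_{\ge0}$; $\rho=(r,r-1,\dots,1,0)$. For $\lambda\in\mathbb{Z}^{r+1}$ put $\Lambda_i=\lambda_i-\lambda_{i+1}$. For $m=(m_{i,j})_{1\le i<j\le r+1}\in\mathbb{N}^N$ define \[ s_{i,j}=\Lambda_i+\sum_{k=j}^{r}m_{i+1,k+1}-\sum_{k=j}^{r+1}m_{i,k}. \] The set of Lusztig data $\mathrm{Lu}(\lambda+\rho)$ is the set of $m\in\mathbb{N}^N$ with $s_{i,j}\ge-1$ for all $1\le i<j\le r+1$. For a partition $\mu=(\mu_1\ge\dots\ge\mu_{r+1}\ge0)$, $\mathrm{GT}(\mu)$ (Gelfand–Tsetlin patterns with top row $\mu$)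 is the set of $(a_{i,j})_{1\le i<j\le r+1}\in\mathbb{N}^N$ such that $a_{i,j+1}\ge a_{i,j}\ge a_{i+1,j+1}$ for all $1\le i<j\le r+1$, where $a_{i,r+2}:=\mu_i$. For formal variables $z_1,\dots,z_{r+1}$ the weights are $z^m=\prod_{i<j}(z_i/z_j)^{m_{i,j}}$ and $z^T=\prod_{i<j}(z_i/z_j)^{a_{i,j+1}-a_{i,j}}$ for $T=(a_{i,j})$. *)

(* Defs.v *)
From HB Require Import structures.
From mathcomp Require Import all_boot all_order all_algebra.
Set Implicit Arguments. Unset Strict Implicit. Unset Printing Implicit Defensive.
Import Order.TTheory GRing.Theory Num.Theory.
Local Open Scope ring_scope.

(* Positive roots of GL_{r+1}: pairs (i,j) with 1 <= i < j <= r+1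
   (1-based, stored as ordinals of 'I_(r+2)). *)
Definition posroot (r : nat) :=
  {p : 'I_(r.+2) * 'I_(r.+2) | (0 < p.1 < p.2)%N}.

(* Triangular arrays (x_{i,j})_{1<=i<j<=r+1} with integer entries; elements
   of N^N are those with nonnegative entries. *)
Definition tarray (r : nat) := {ffun posroot r -> int}.

Definition rt (r : nat) (p : posroot r) : nat := (val p).1.
Definition ct (r : nat) (p : posroot r) : nat := (val p).2.

(* entry (i,j) of an array, for 1 <= i < j <= r+1 (0 outside that range) *)
Definition get (r : nat) (x : tarray r) (i j : nat) : int :=
  if insub (inord i : 'I_(r.+2), inord j : 'I_(r.+2)) is Some p then x p else 0.

(* lambda_i, 1-based, 1 <= i <= r+1 *)
Definition lamn (r : nat) (lam : 'I_(r.+1) -> int) (i : nat) : int :=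
  lam (inord i.-1).

(* (lambda + rho)_i = lambda_i + r + 1 - i *)
Definition mu (r : nat) (lam : 'I_(r.+1) -> int) (i : nat) : int :=
  lamn lam i + (r.+1 - i)%:Z.

Definition Lam (r : nat) (lam : 'I_(r.+1) -> int) (i : nat) : int :=
  lamn lam i - lamn lam i.+1.

Definition is_partition (r : nat) (lam : 'I_(r.+1) -> int) : Prop :=
  (forall i : nat, (1 <= i <= r)%N -> mu lam i.+1 <= mu lam i) /\
  0 <= mu lam r.+1.

Definition s_ij (r : nat) (lam : 'I_(r.+1) -> int) (m : tarray r) (i j : nat) : int :=
  Lam lam i + \sum_(j <= k < r.+1) get m i.+1 k.+1
            - \sum_(j <= k < r.+2) get m i k.

Definition Lu (r : nat) (lam : 'I_(r.+1) -> int) (m : tarray r) : Prop :=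
  (forall p : posroot r, 0 <= m p) /\
  (forall p : posroot r, -1 <= s_ij lam m (rt p) (ct p)).

Definition aext (r : nat) (lam : 'I_(r.+1) -> int) (a : tarray r) (i j : nat) : int :=
  if j == r.+2 then mu lam i else get a i j.

Definition GT (r : nat) (lam : 'I_(r.+1) -> int) (a : tarray r) : Prop :=
  (forall p : posroot r, 0 <= a p) /\
  (forall p : posroot r,
      a p <= aext lam a (rt p) (ct p).+1 /\
      aext lam a (rt p).+1 (ct p).+1 <= a p).

(* the recursion a_{i,r+2} = mu_i, a_{i,j} = a_{i,j+1} - m_{i,j};
   frec m i d = a_{i, r+2-d} *)
Fixpoint frec (r : nat) (lam : 'I_(r.+1) -> int) (m : tarray r) (i d : nat) : int :=
  match d with
  | 0 => mu lam i
  | d'.+1 => frec lam m i d' - get m i (r.+2 - d)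
  end.

Definition f (r : nat) (lam : 'I_(r.+1) -> int) (m : tarray r) : tarray r :=
  [ffun p => frec lam m (rt p) (r.+2 - ct p)].

Definition g (r : nat) (lam : 'I_(r.+1) -> int) (a : tarray r) : tarray r :=
  [ffun p => aext lam a (rt p) (ct p).+1 - a p].

(* variables z_1, ..., z_{r+1} (1-based) *)
Definition zn (F : fieldType) (r : nat) (z : 'I_(r.+1) -> F) (i : nat) : F :=
  z (inord i.-1).

Definition zwm (F : fieldType) (r : nat) (z : 'I_(r.+1) -> F) (m : tarray r) : F :=
  \prod_(p : posroot r) (zn z (rt p) / zn z (ct p)) ^ (m p).

Definition zwT (F : fieldType) (r : nat) (lam : 'I_(r.+1) -> int)
    (z : 'I_(r.+1) -> F) (a : tarray r) : F :=
  \prod_(p : posroot r)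
     (zn z (rt p) / zn z (ct p)) ^ (aext lam a (rt p) (ct p).+1 - a p).

(* Main.v *)
Require Import Defs.
From HB Require Import structures.
From mathcomp Require Import all_boot all_order all_algebra.
From mathcomp Require Import zify ring.
Import Order.TTheory GRing.Theory Num.Theory.
Local Open Scope ring_scope.

Section Aux.
Set Implicit Arguments.
Variable r : nat.
Variable lam : 'I_(r.+1) -> int.

Lemma rtct (p : posroot r) : [/\ (0 < rt p)%N, (rt p < ct p)%N & (ct p < r.+2)%N].
Proof.
case: p => [[a b] H]; rewrite /rt /ct /=; move/andP: H => /= [h1 h2].
by split => //; exact: ltn_ord.
Qed.

Lemma get_val (x : tarray r) (p : posroot r) : get x (rt p) (ct p) = x p.
Proof.
rewrite /get.
have -> : (inord (rt p), inord (ct p)) = val p :> ('I_(r.+2) * 'I_(r.+2)).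
  by case: p => [[a b] H]; rewrite /rt /ct /= !inord_val.
by rewrite valK.
Qed.

Lemma posroot_ex {i j : nat} : (0 < i)%N -> (i < j)%N -> (j < r.+2)%N ->
  {p : posroot r | rt p = i /\ ct p = j}.
Proof.
move=> h1 h2 h3.
have hi : (i < r.+2)%N by lia.
have H : (0 < (Ordinal hi, Ordinal h3).1 < (Ordinal hi, Ordinal h3).2)%N.
  by rewrite /= h1 h2.
by exists (exist _ (Ordinal hi, Ordinal h3) H).
Qed.

Lemma frec_closed (m : tarray r) i d : (d <= r.+1)%N ->
  frec lam m i d = mu lam i - \sum_(r.+2 - d <= k < r.+2) get m i k.
Proof.
elim: d => [|d IH] Hd /=.
  by rewrite subn0 big_geq // subr0.
rewrite IH; last by lia.
rewrite (big_ltn (m := r.+2 - d.+1)); last by lia.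
have -> : (r.+2 - d.+1).+1 = (r.+2 - d)%N by lia.
ring.
Qed.

Lemma fE (m : tarray r) p :
  f lam m p = mu lam (rt p) - \sum_(ct p <= k < r.+2) get m (rt p) k.
Proof.
case: (rtct p) => h1 h2 h3.
rewrite ffunE frec_closed; last by lia.
by have -> : (r.+2 - (r.+2 - ct p))%N = ct p by lia.
Qed.

Lemma aextfE (m : tarray r) i j : (0 < i)%N -> (i < j)%N -> (j <= r.+2)%N ->
  aext lam (f lam m) i j = mu lam i - \sum_(j <= k < r.+2) get m i k.
Proof.
move=> h1 h2 h3; rewrite /aext.
case: eqP => [->|hne]; first by rewrite big_geq // subr0.
have h4 : (j < r.+2)%N by lia.
case: (posroot_ex h1 h2 h4) => p [<- <-].
by rewrite get_val fE.
Qed.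

Lemma gfE (m : tarray r) : g lam (f lam m) = m.
Proof.
apply/ffunP => p; case: (rtct p) => h1 h2 h3.
rewrite ffunE aextfE //; try lia.
rewrite fE (big_ltn (m := ct p)) // get_val.
ring.
Qed.

Lemma ga_closed (a : tarray r) i : (0 < i)%N -> forall d j, (j + d = r.+2)%N -> (i < j)%N ->
  mu lam i - \sum_(j <= k < r.+2) get (g lam a) i k = aext lam a i j.
Proof.
move=> h1; elim=> [|d IH] j hj hij.
  rewrite addn0 in hj; subst j.
  by rewrite big_geq // subr0 /aext eqxx.
have h4 : (j < r.+2)%N by lia.
rewrite (big_ltn (m := j)) //.
have := IH j.+1 ltac:(lia) ltac:(lia) => IH'.
case: (posroot_ex h1 hij h4) => p [ei ej].
have -> : get (g lam a) i j = g lam a p by rewrite -ei -ej get_val.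
rewrite ffunE ei ej.
have -> : aext lam a i j = a p.
  by rewrite /aext ifN; [rewrite -ei -ej get_val | apply/eqP; lia].
rewrite -IH'; ring.
Qed.

Lemma fgE (a : tarray r) : f lam (g lam a) = a.
Proof.
apply/ffunP => p; case: (rtct p) => h1 h2 h3.
rewrite fE (@ga_closed a (rt p) h1 (r.+2 - ct p) (ct p)) //; last by lia.
rewrite /aext ifN; last by apply/eqP; lia.
by rewrite get_val.
Qed.

Lemma s_rel (m : tarray r) p :
  s_ij lam m (rt p) (ct p) + 1 = f lam m p - aext lam (f lam m) (rt p).+1 (ct p).+1.
Proof.
case: (rtct p) => h1 h2 h3.
rewrite fE aextfE //; try lia.
rewrite /s_ij big_add1 /=.
have e : ((r.+1 - rt p)%N%:Z = (r.+1 - (rt p).+1)%N%:Z + 1) by lia.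
rewrite /mu /Lam e.
ring.
Qed.

Lemma mu_nonneg : is_partition lam -> forall k i, (i + k = r.+1)%N -> (1 <= i)%N ->
  0 <= mu lam i.
Proof.
case=> hp1 hp2; elim=> [|k IH] i hik hi.
  by rewrite addn0 in hik; subst i.
apply: le_trans (IH i.+1 ltac:(lia) ltac:(lia)) _.
apply: hp1; lia.
Qed.

Lemma aext_nonneg (a : tarray r) : is_partition lam ->
  (forall p : posroot r, aext lam a (rt p).+1 (ct p).+1 <= a p) ->
  forall d i j, (j + d = r.+2)%N -> (0 < i)%N -> (i < j)%N -> 0 <= aext lam a i j.
Proof.
move=> hp ha; elim=> [|d IH] i j hj h1 h2.
  rewrite addn0 in hj; subst j.
  rewrite /aext eqxx; apply: (@mu_nonneg hp (r.+1 - i)); lia.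
have h4 : (j < r.+2)%N by lia.
case: (posroot_ex h1 h2 h4) => p [ei ej].
have -> : aext lam a i j = a p.
  by rewrite /aext ifN; [rewrite -ei -ej get_val | apply/eqP; lia].
apply: le_trans (ha p).
rewrite ei ej; apply: IH; lia.
Qed.

End Aux.

Theorem mainTheorem5 (r : nat) (lam : 'I_(r.+1) -> int) :
  (1 <= r)%N -> is_partition lam ->
  [/\ (forall m : tarray r, Lu lam m -> GT lam (f lam m)),
      (forall a : tarray r, GT lam a -> Lu lam (g lam a)),
      (forall m : tarray r, Lu lam m -> g lam (f lam m) = m),
      (forall a : tarray r, GT lam a -> f lam (g lam a) = a) &
      (forall (F : fieldType) (z : 'I_(r.+1) -> F),
          (forall i, z i != 0) ->
          forall m : tarray r, Lu lam m -> zwT lam z (f lam m) = zwm z m)].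
Proof.
move=> hr hp; split.
- move=> m [hm hs].
  have hint : forall p : posroot r, aext lam (f lam m) (rt p).+1 (ct p).+1 <= f lam m p.
    move=> p; rewrite -subr_ge0 -s_rel.
    have := hs p; rewrite -(lerD2r 1) addNr //.
  split.
  + move=> p; case: (rtct p) => h1 h2 h3.
    have := @aext_nonneg r lam (f lam m) hp hint (r.+2 - ct p) (rt p) (ct p)
      ltac:(lia) h1 h2.
    by rewrite /aext ifN ?get_val //; apply/eqP; lia.
  + move=> p; split; last exact: hint.
    have := hm p; have := congr1 (fun x : tarray r => x p) (gfE lam m).
    by rewrite /= ffunE => <-; rewrite subr_ge0.
- move=> a [ha0 ha]; split.
  + by move=> p; rewrite ffunE subr_ge0; case: (ha p).
  + move=> p; have := s_rel lam (g lam a) p; rewrite fgE => e.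
    rewrite -(lerD2r 1) addNr e subr_ge0; by case: (ha p).
- by move=> m _; exact: gfE.
- by move=> a _; exact: fgE.
- move=> F z _ m _; rewrite /zwT /zwm; apply: eq_bigr => p _.
  by have := congr1 (fun x : tarray r => x p) (gfE lam m); rewrite /= ffunE => ->.
Qed.
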